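(* Let $n\ge2$ and let $(x,y,z)$ be a $C^1$ solution of \[\dot x=nx^2+z^2,\quad \dot y=(n+1)z^2,\quad \dot z=\tfrac{n+1}{n}z\big((n-1)x+y\big),\qquad (x,y,z)(0)=(x_0,y_0,z_0)\in\mathbb R^3_{>0},\] on $[0,T)$, where $T$ is the maximal time of existence. Then $T\leq\big((n+1)\min\{x_0,y_0,z_0\}\big)^{-1}<\infty$, and \[x,y,z\geq\frac{1}{\min\{x_0,y_0,z_0\}^{-1}-(n+1)t}\qquad\text{for all }t\in[0,T).\] *)

(* Defs.v *)
From Stdlib Require Import Reals Lra.
From Coquelicot Require Import Coquelicot.
Open Scope R_scope.

Definition right_deriv (f : R -> R) (a l : R) : Prop :=
  filterlim (fun h => (f (a + h) - f a) / h) (at_right 0) (locally l).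

Definition deriv_on_0T (f f' : R -> R) (T : Rbar) : Prop :=
  right_deriv f 0 (f' 0) /\
  (forall t : R, 0 < t -> Rbar_lt t T -> is_derive f t (f' t)).

Definition is_solution (n : nat) (T : Rbar) (x y z : R -> R) (x0 y0 z0 : R) : Prop :=
  Rbar_lt 0 T /\
  x 0 = x0 /\ y 0 = y0 /\ z 0 = z0 /\
  deriv_on_0T x (fun t => INR n * (x t)^2 + (z t)^2) T /\
  deriv_on_0T y (fun t => (INR n + 1) * (z t)^2) T /\
  deriv_on_0T z (fun t => (INR n + 1) / INR n * z t * ((INR n - 1) * x t + y t)) T.

Definition maximal_solution (n : nat) (T : Rbar) (x y z : R -> R) (x0 y0 z0 : R) : Prop :=
  is_solution n T x y z x0 y0 z0 /\
  forall (T' : Rbar) (x' y' z' : R -> R),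
    Rbar_lt T T' -> ~ is_solution n T' x' y' z' x0 y0 z0.

(* Main.v *)
Require Import Defs.
From Stdlib Require Import Reals Lra Lia Psatz Classical.
From Coquelicot Require Import Coquelicot.
Open Scope R_scope.

Definition rcont (f : R -> R) (s : R) : Prop :=
  forall eps, 0 < eps -> exists eta, 0 < eta /\
    forall r, 0 <= r -> Rabs (r - s) < eta -> Rabs (f r - f s) < eps.

Lemma small_lemma (a h l eps : R) : 0 < eps -> h <> 0 -> Rabs (a / h - l) < 1 ->
  Rabs h < eps / (Rabs l + 1) -> Rabs a < eps.
Proof.
  intros He Hh Hq Hhs.
  pose proof (Rabs_pos l) as Hl.
  assert (Hq' : Rabs (a / h) < Rabs l + 1).
  { pose proof (Rabs_triang (a / h - l) l) as T.
    replace (a / h - l + l) with (a / h) in T by ring. lra. }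
  assert (E : a = h * (a / h)) by (field; auto).
  rewrite E, Rabs_mult.
  apply Rle_lt_trans with (Rabs h * (Rabs l + 1)).
  - apply Rmult_le_compat_l; [apply Rabs_pos | lra].
  - replace eps with (eps / (Rabs l + 1) * (Rabs l + 1)) by (field; lra).
    apply Rmult_lt_compat_r; lra.
Qed.

Lemma deriv_rcont f s l : derivable_pt_lim f s l -> rcont f s.
Proof.
  intros H eps He. destruct (H 1 Rlt_0_1) as [d Hd].
  pose proof (Rabs_pos l).
  exists (Rmin d (eps / (Rabs l + 1))). split.
  { apply Rmin_pos; [apply cond_pos | apply Rdiv_lt_0_compat; lra]. }
  intros r _ Hr.
  destruct (Req_dec r s) as [->|Hne].
  { replace (f s - f s) with 0 by ring. rewrite Rabs_R0; lra. }
  assert (Hh : r - s <> 0) by lra.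
  pose proof (Rmin_l d (eps / (Rabs l + 1))).
  pose proof (Rmin_r d (eps / (Rabs l + 1))).
  specialize (Hd (r - s) Hh ltac:(lra)).
  replace (s + (r - s)) with r in Hd by ring.
  apply (small_lemma _ (r - s) l); auto; lra.
Qed.

Lemma rderiv_rcont f l : right_deriv f 0 l -> rcont f 0.
Proof.
  intros H eps He.
  pose proof (proj1 (filterlim_locally _ _) H (mkposreal 1 Rlt_0_1)) as H1.
  destruct H1 as [d Hd]. simpl in Hd.
  pose proof (Rabs_pos l).
  exists (Rmin d (eps / (Rabs l + 1))). split.
  { apply Rmin_pos; [apply cond_pos | apply Rdiv_lt_0_compat; lra]. }
  intros r Hr0 Hr.
  destruct (Req_dec r 0) as [->|Hne].
  { replace (f 0 - f 0) with 0 by ring. rewrite Rabs_R0; lra. }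
  pose proof (Rmin_l d (eps / (Rabs l + 1))).
  pose proof (Rmin_r d (eps / (Rabs l + 1))).
  assert (Hb : ball 0 d r).
  { unfold ball; simpl. unfold AbsRing_ball, abs, minus, plus, opp; simpl. 
    replace (r + - 0) with (r - 0) by ring. lra. }
  specialize (Hd r Hb ltac:(lra)).
  unfold ball in Hd; simpl in Hd. unfold AbsRing_ball, abs, minus, plus, opp in Hd; simpl in Hd.
  replace (0 + r) with r in Hd by ring.
  replace (r - 0) with r in Hr by ring.
  apply (small_lemma _ r l); auto; lra.
Qed.

Lemma rcont_minus f g s : rcont f s -> rcont g s -> rcont (fun r => f r - g r) s.
Proof.
  intros Hf Hg eps He.
  destruct (Hf (eps/2) ltac:(lra)) as [e1 [He1 H1]].
  destruct (Hg (eps/2) ltac:(lra)) as [e2 [He2 H2]].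
  exists (Rmin e1 e2). split; [apply Rmin_pos; auto|].
  intros r Hr Hrs.
  pose proof (Rmin_l e1 e2). pose proof (Rmin_r e1 e2).
  specialize (H1 r Hr ltac:(lra)). specialize (H2 r Hr ltac:(lra)).
  pose proof (Rabs_triang (f r - f s) (- (g r - g s))) as T.
  rewrite Rabs_Ropp in T.
  replace (f r - g r - (f s - g s)) with (f r - f s + - (g r - g s)) by ring. lra.
Qed.

Lemma compare (f : nat -> R -> R) (tau : R) :
  0 <= tau ->
  (forall i, (i < 3)%nat -> 0 < f i 0) ->
  (forall i, (i < 3)%nat -> forall s, 0 <= s <= tau -> rcont (f i) s) ->
  (forall s, 0 < s <= tau -> (forall i, (i < 3)%nat -> 0 <= f i s) ->
     forall j, (j < 3)%nat -> f j s = 0 ->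
     exists L, 0 < L /\ derivable_pt_lim (f j) s L) ->
  forall s, 0 <= s <= tau -> forall i, (i < 3)%nat -> 0 < f i s.
Proof.
  intros Htau H0 Hc Hd.
  apply NNPP; intro Hn.
  assert (Hex : exists s1 i1, 0 <= s1 <= tau /\ (i1 < 3)%nat /\ f i1 s1 <= 0).
  { apply NNPP; intro Hn2; apply Hn; intros s Hs i Hi.
    apply Rnot_le_lt; intro Hle. apply Hn2; exists s, i; auto. }
  destruct Hex as (s1 & i1 & Hs1 & Hi1 & Hf1).
  set (E := fun s => 0 <= s <= tau /\
             forall r, 0 <= r <= s -> forall i, (i < 3)%nat -> 0 < f i r).
  assert (HE0 : E 0).
  { split. lra. intros r Hr i Hi. replace r with 0 by lra. auto. }
  assert (HEb : forall s, E s -> s < s1).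
  { intros s [Hs Hall]. apply Rnot_le_lt; intro Hle.
    specialize (Hall s1 ltac:(lra) i1 Hi1). lra. }
  destruct (completeness E) as [sg [Hub Hlub]].
  { exists s1. intros s Hs. left. auto. }
  { exists 0; auto. }
  assert (Hsg0 : 0 <= sg) by (apply Hub; auto).
  assert (Hsg1 : sg <= s1).
  { apply Hlub. intros s Hs; left; auto. }
  assert (G : forall r, 0 <= r < sg -> forall i, (i < 3)%nat -> 0 < f i r).
  { intros r Hr i Hi.
    destruct (classic (exists s, E s /\ r <= s)) as [[s [[_ Hs] Hrs]]|Hno].
    - apply Hs; auto; lra.
    - exfalso. assert (sg <= r).
      { apply Hlub. intros s Hs. destruct (Rle_dec s r) as [?|Hsr]; auto.
        exfalso; apply Hno; exists s; split; auto; lra. }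
      lra. }
  destruct (classic (forall i, (i < 3)%nat -> 0 < f i sg)) as [Hall|Hnall].
  - assert (Hlt : sg < s1).
    { destruct Hsg1 as [?|Heq]; auto. specialize (Hall i1 Hi1).
      rewrite Heq in Hall; lra. }
    assert (Heta : exists eta, 0 < eta /\ forall i, (i < 3)%nat -> forall r,
               0 <= r -> Rabs (r - sg) < eta -> 0 < f i r).
    { destruct (Hc 0%nat ltac:(lia) sg ltac:(lra) (f 0%nat sg) (Hall 0%nat ltac:(lia)))
        as [e0 [He0 H0']].
      destruct (Hc 1%nat ltac:(lia) sg ltac:(lra) (f 1%nat sg) (Hall 1%nat ltac:(lia)))
        as [e1 [He1 H1']].
      destruct (Hc 2%nat ltac:(lia) sg ltac:(lra) (f 2%nat sg) (Hall 2%nat ltac:(lia)))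
        as [e2 [He2 H2']].
      exists (Rmin e0 (Rmin e1 e2)). split.
      { repeat apply Rmin_pos; auto. }
      pose proof (Rmin_l e0 (Rmin e1 e2)). pose proof (Rmin_r e0 (Rmin e1 e2)).
      pose proof (Rmin_l e1 e2). pose proof (Rmin_r e1 e2).
      intros i Hi r Hr Hrs. destruct i as [|[|[|i]]]; [ | | | lia].
      + specialize (H0' r Hr ltac:(lra)). apply Rabs_def2 in H0'. lra.
      + specialize (H1' r Hr ltac:(lra)). apply Rabs_def2 in H1'. lra.
      + specialize (H2' r Hr ltac:(lra)). apply Rabs_def2 in H2'. lra. }
    destruct Heta as [eta [Heta Hpos]].
    set (s' := Rmin (sg + eta / 2) tau).
    pose proof (Rmin_l (sg + eta / 2) tau). pose proof (Rmin_r (sg + eta / 2) tau).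
    assert (HEs : E s').
    { split. split; [apply Rmin_glb; lra | apply Rmin_r].
      intros r Hr i Hi. destruct (Rlt_dec r sg).
      - apply G; auto; lra.
      - apply Hpos; auto; try lra. rewrite Rabs_right; [|lra]. unfold s' in Hr. lra. }
    assert (sg < s') by (apply Rmin_glb_lt; lra).
    specialize (Hub s' HEs). lra.
  - destruct (classic (exists j, (j < 3)%nat /\ f j sg <= 0)) as [[j [Hj Hfj]] | Hno].
    2: { exfalso. apply Hnall. intros i Hi. apply Rnot_le_lt. intro. apply Hno. eauto. }
    assert (Hsgpos : 0 < sg).
    { destruct Hsg0 as [?|Heq]; auto. rewrite <- Heq in Hfj. specialize (H0 j Hj). lra. }
    assert (Hnn : forall i, (i < 3)%nat -> 0 <= f i sg).
    { intros i Hi. apply Rnot_lt_le. intro Hneg.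
      destruct (Hc i Hi sg ltac:(lra) (- f i sg) ltac:(lra)) as [eta [Heta Hcl]].
      set (r := Rmax (sg - eta / 2) (sg / 2)).
      pose proof (Rmax_l (sg - eta / 2) (sg / 2)). pose proof (Rmax_r (sg - eta / 2) (sg / 2)).
      assert (Hr : 0 <= r < sg).
      { unfold r; split; [lra | apply Rmax_lub_lt; lra]. }
      assert (Hrs : Rabs (r - sg) < eta).
      { rewrite Rabs_left; [|lra]. unfold r. lra. }
      specialize (Hcl r ltac:(lra) Hrs). apply Rabs_def2 in Hcl.
      specialize (G r Hr i Hi). lra. }
    assert (Hz : f j sg = 0) by (specialize (Hnn j Hj); lra).
    destruct (Hd sg ltac:(lra) Hnn j Hj Hz) as [L [HL Hder]].
    destruct (Hder L HL) as [d Hdd].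
    pose proof (cond_pos d).
    set (h := - Rmin (d / 2) (sg / 2)).
    pose proof (Rmin_l (d / 2) (sg / 2)). pose proof (Rmin_r (d / 2) (sg / 2)).
    assert (Hm : 0 < Rmin (d / 2) (sg / 2)) by (apply Rmin_pos; lra).
    assert (Hh : h < 0) by (unfold h; lra).
    assert (Hha : Rabs h < d) by (rewrite Rabs_left; unfold h in *; lra).
    specialize (Hdd h ltac:(lra) Hha). rewrite Hz in Hdd. apply Rabs_def2 in Hdd.
    assert (Hq : 0 < (f j (sg + h) - 0) / h) by lra.
    assert (Eq : f j (sg + h) = ((f j (sg + h) - 0) / h) * h) by (field; lra).
    assert (f j (sg + h) < 0) by nra.
    specialize (G (sg + h) ltac:(unfold h in *; lra) j Hj). lra.
Qed.

Lemma deriv_on_rcont u u' T : deriv_on_0T u u' T ->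
  forall s, 0 <= s -> Rbar_lt s T -> rcont u s.
Proof.
  intros [H0 H1] s Hs HsT. destruct Hs as [Hs|<-].
  - apply (deriv_rcont _ _ (u' s)). apply is_derive_Reals. apply H1; auto.
  - apply (rderiv_rcont _ (u' 0)). exact H0.
Qed.

Lemma cmp (n : nat) T x y z x0 y0 z0 : (2 <= n)%nat -> 0 < x0 -> 0 < y0 -> 0 < z0 ->
  is_solution n T x y z x0 y0 z0 ->
  forall d, 0 < d -> forall t, 0 <= t -> Rbar_lt t T ->
  0 < / Rmin x0 (Rmin y0 z0) - (INR n + 1) * t ->
  let b := / (/ Rmin x0 (Rmin y0 z0) + d - (INR n + 1 - d * d) * t) in
  b < x t /\ b < y t /\ b < z t.
Proof.
  intros Hn Hx0p Hy0p Hz0p Hsol d Hd t Ht HtT HD b.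
  destruct Hsol as (HT & Hx0 & Hy0 & Hz0 & Dx & Dy & Dz).
  assert (Hn2 : 2 <= INR n).
  { apply (le_INR 2 n) in Hn. replace (INR 2) with 2 in Hn by (simpl; ring). exact Hn. }
  set (m := Rmin x0 (Rmin y0 z0)) in *.
  assert (Hm : 0 < m) by (unfold m; repeat apply Rmin_pos; auto).
  assert (Hmx : m <= x0) by (unfold m; apply Rmin_l).
  assert (Hmy : m <= y0) by (unfold m; eapply Rle_trans; [apply Rmin_r | apply Rmin_l]).
  assert (Hmz : m <= z0) by (unfold m; eapply Rle_trans; [apply Rmin_r | apply Rmin_r]).
  set (N := INR n + 1) in *.
  set (K := / m + d) in *.
  set (c := N - d * d) in *.
  assert (Him : 0 < / m) by (apply Rinv_0_lt_compat; auto).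
  assert (HDpos : forall s, 0 <= s <= t -> 0 < K - c * s).
  { intros s Hs. unfold K, c.
    assert (N * s <= N * t) by (apply Rmult_le_compat_l; unfold N; lra).
    assert (0 <= d * d * s) by (apply Rmult_le_pos; nra).
    nra. }
  assert (Hbd : forall s, 0 <= s <= t ->
            derivable_pt_lim (fun s => / (K - c * s)) s (c * (/ (K - c * s)) ^ 2)).
  { intros s Hs. specialize (HDpos s Hs). apply is_derive_Reals.
    auto_derive; [lra|]. field. lra. }
  assert (HsT : forall s, s <= t -> Rbar_lt s T).
  { intros s Hs. apply Rbar_le_lt_trans with t; [simpl; exact Hs | exact HtT]. }
  pose (f := fun i s => match i with
                        | 0%nat => x s - / (K - c * s)
                        | 1%nat => y s - / (K - c * s)
                        | _ => z s - / (K - c * s) end).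
  assert (Hb0 : / (K - c * 0) < m).
  { replace (K - c * 0) with K by ring. unfold K.
    rewrite <- (Rinv_inv m) at 2.
    apply Rinv_lt_contravar; [apply Rmult_lt_0_compat|]; lra. }
  assert (Hf := compare f t Ht).
  assert (Hf2 : forall s, 0 <= s <= t -> forall i, (i < 3)%nat -> 0 < f i s).
  { apply Hf.
    - intros i Hi. destruct i as [|[|[|i]]]; try lia; unfold f; lra.
    - intros i Hi s Hs. destruct i as [|[|[|i]]]; try lia; unfold f;
        apply (rcont_minus _ (fun s => / (K - c * s)));
        try (apply (deriv_rcont _ _ _ (Hbd s Hs))).
      + apply (deriv_on_rcont _ _ _ Dx); [lra | apply HsT; lra].
      + apply (deriv_on_rcont _ _ _ Dy); [lra | apply HsT; lra].
      + apply (deriv_on_rcont _ _ _ Dz); [lra | apply HsT; lra].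
    - intros s Hs Hall j Hj Hz.
      assert (Hxs := Hall 0%nat ltac:(lia)). assert (Hys := Hall 1%nat ltac:(lia)).
      assert (Hzs := Hall 2%nat ltac:(lia)). unfold f in Hxs, Hys, Hzs.
      assert (Hs' : 0 <= s <= t) by lra.
      assert (Hbp : 0 < / (K - c * s)) by (apply Rinv_0_lt_compat; auto).
      set (bs := / (K - c * s)) in *.
      assert (HsT' := HsT s (proj2 Hs)).
      assert (Hdp : 0 < d * d * (bs * bs)) by (apply Rmult_lt_0_compat; nra).
      assert (Hxx : bs * bs <= x s * x s) by nra.
      assert (Hzz : bs * bs <= z s * z s) by nra.
      destruct j as [|[|[|j]]]; try lia; unfold f.
      + exists (INR n * x s ^ 2 + z s ^ 2 - c * bs ^ 2). split.
        * unfold c, N in *. simpl. nra.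
        * apply (derivable_pt_lim_minus x (fun s => / (K - c * s))).
          -- apply is_derive_Reals. apply (proj2 Dx); [lra | auto].
          -- apply Hbd; auto.
      + exists ((INR n + 1) * z s ^ 2 - c * bs ^ 2). split.
        * unfold c, N in *. simpl. nra.
        * apply (derivable_pt_lim_minus y (fun s => / (K - c * s))).
          -- apply is_derive_Reals. apply (proj2 Dy); [lra | auto].
          -- apply Hbd; auto.
      + exists ((INR n + 1) / INR n * z s * ((INR n - 1) * x s + y s) - c * bs ^ 2). split.
        * assert (A : INR n * (bs * bs) <= z s * ((INR n - 1) * x s + y s)).
          { assert (0 <= (INR n - 1) * (x s - bs)) by nra.
            assert (bs * (INR n * bs) <= z s * (INR n * bs)).
            { apply Rmult_le_compat_r; [apply Rmult_le_pos; lra | lra]. }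
            assert (z s * (INR n * bs) <= z s * ((INR n - 1) * x s + y s)).
            { apply Rmult_le_compat_l; lra. }
            nra. }
          assert (B : N * (bs * bs) <= (INR n + 1) / INR n * z s * ((INR n - 1) * x s + y s)).
          { replace ((INR n + 1) / INR n * z s * ((INR n - 1) * x s + y s))
              with (N / INR n * (z s * ((INR n - 1) * x s + y s))) by (unfold N; ring).
            replace (N * (bs * bs)) with (N / INR n * (INR n * (bs * bs))) by (field; lra).
            apply Rmult_le_compat_l; auto.
            apply Rlt_le, Rdiv_lt_0_compat; unfold N; lra. }
          unfold c in *. simpl. nra.
        * apply (derivable_pt_lim_minus z (fun s => / (K - c * s))).
          -- apply is_derive_Reals. apply (proj2 Dz); [lra | auto].
          -- apply Hbd; auto. }
  assert (Htt : 0 <= t <= t) by lra.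
  pose proof (Hf2 t Htt 0%nat ltac:(lia)). pose proof (Hf2 t Htt 1%nat ltac:(lia)).
  pose proof (Hf2 t Htt 2%nat ltac:(lia)). unfold f in *.
  unfold b. repeat split; lra.
Qed.

Lemma limit_arg (u D t : R) : 0 <= t -> 0 < D ->
  (forall d, 0 < d -> / (D + d + d * d * t) < u) -> / D <= u.
Proof.
  intros Ht HD H.
  assert (Hu : 0 < u).
  { specialize (H 1 Rlt_0_1). assert (0 < / (D + 1 + 1 * 1 * t)).
    { apply Rinv_0_lt_compat. nra. } lra. }
  apply Rnot_lt_le. intro Hlt.
  assert (HiD : 0 < / D) by (apply Rinv_0_lt_compat; auto).
  assert (Hg : D < / u).
  { rewrite <- (Rinv_inv D). apply Rinv_lt_contravar; [apply Rmult_lt_0_compat|]; lra. }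
  set (g := / u - D).
  set (d := Rmin 1 (g / (2 * (1 + t)))).
  assert (Hg2 : 0 < g / (2 * (1 + t))) by (apply Rdiv_lt_0_compat; unfold g; lra).
  assert (Hd : 0 < d) by (unfold d; apply Rmin_pos; lra).
  pose proof (Rmin_l 1 (g / (2 * (1 + t)))). pose proof (Rmin_r 1 (g / (2 * (1 + t)))).
  assert (Hd1 : d * (1 + t) <= g / 2).
  { apply Rle_trans with (g / (2 * (1 + t)) * (1 + t)).
    - apply Rmult_le_compat_r; [lra | unfold d; lra].
    - right. field. lra. }
  assert (Hsum : D + d + d * d * t < / u).
  { assert (d * d * t <= d * t).
    { assert (d * d <= d * 1) by (apply Rmult_le_compat_l; unfold d in *; lra). nra. }
    unfold g in *. nra. }
  specialize (H d Hd).
  assert (u < / (D + d + d * d * t)).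
  { rewrite <- (Rinv_inv u) at 1. apply Rinv_lt_contravar; [|lra].
    apply Rmult_lt_0_compat; [nra | apply Rinv_0_lt_compat; lra]. }
  lra.
Qed.

Theorem proposition3p3 (n : nat) (x0 y0 z0 : R) (T : Rbar) (x y z : R -> R) :
  (2 <= n)%nat ->
  0 < x0 -> 0 < y0 -> 0 < z0 ->
  maximal_solution n T x y z x0 y0 z0 ->
  Rbar_le T (Finite (/ ((INR n + 1) * Rmin x0 (Rmin y0 z0)))) /\
  (forall t : R, 0 <= t -> Rbar_lt t T ->
     let b := / (/ Rmin x0 (Rmin y0 z0) - (INR n + 1) * t) in
     b <= x t /\ b <= y t /\ b <= z t).
Proof.
  intros Hn Hx0 Hy0 Hz0 [Hsol _].
  assert (PA : forall t, 0 <= t -> Rbar_lt t T ->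
            0 < / Rmin x0 (Rmin y0 z0) - (INR n + 1) * t ->
            let b := / (/ Rmin x0 (Rmin y0 z0) - (INR n + 1) * t) in
            b <= x t /\ b <= y t /\ b <= z t).
  { intros t Ht HtT HD b.
    assert (C := cmp n T x y z x0 y0 z0 Hn Hx0 Hy0 Hz0 Hsol).
    assert (E : forall d, / (/ Rmin x0 (Rmin y0 z0) + d - (INR n + 1 - d * d) * t)
                 = / ((/ Rmin x0 (Rmin y0 z0) - (INR n + 1) * t) + d + d * d * t)).
    { intros d. f_equal. ring. }
    repeat split; apply limit_arg with (t := t); auto; intros d Hd;
      destruct (C d Hd t Ht HtT HD) as (A1 & A2 & A3); rewrite <- E; auto. }
  set (m := Rmin x0 (Rmin y0 z0)) in *.
  assert (Hm : 0 < m) by (unfold m; repeat apply Rmin_pos; auto).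
  assert (Hn2 : 2 <= INR n).
  { apply (le_INR 2 n) in Hn. replace (INR 2) with 2 in Hn by (simpl; ring). exact Hn. }
  set (N := INR n + 1) in *.
  assert (HN : 0 < N) by (unfold N; lra).
  set (ts := / (N * m)).
  assert (Hts : 0 < ts) by (unfold ts; apply Rinv_0_lt_compat, Rmult_lt_0_compat; auto).
  assert (Hts2 : / m - N * ts = 0) by (unfold ts; field; lra).
  assert (PB : Rbar_le T ts).
  { apply NNPP; intro Hnle. apply Rbar_not_le_lt in Hnle.
    destruct Hsol as (HT & _ & _ & _ & Dx & _).
    assert (Hc := deriv_on_rcont _ _ _ Dx ts ltac:(lra) Hnle).
    destruct (Hc 1 Rlt_0_1) as [eta [Heta Hcl]].
    pose proof (Rabs_pos (x ts)).
    set (q := / (N * (Rabs (x ts) + 2))).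
    assert (Hq : 0 < q) by (unfold q; apply Rinv_0_lt_compat, Rmult_lt_0_compat; lra).
    set (h := Rmin (eta / 2) (Rmin (ts / 2) q)).
    pose proof (Rmin_l (eta / 2) (Rmin (ts / 2) q)).
    pose proof (Rmin_r (eta / 2) (Rmin (ts / 2) q)).
    pose proof (Rmin_l (ts / 2) q). pose proof (Rmin_r (ts / 2) q).
    assert (Hh : 0 < h) by (unfold h; repeat apply Rmin_pos; lra).
    set (t := ts - h).
    assert (Ht0 : 0 <= t) by (unfold t, h in *; lra).
    assert (HtT : Rbar_lt t T).
    { apply Rbar_le_lt_trans with ts; auto. simpl. unfold t; lra. }
    assert (HDt : / m - N * t = N * h) by (unfold t; lra).
    assert (HD : 0 < / m - N * t) by (rewrite HDt; nra).
    destruct (PA t Ht0 HtT HD) as [Hxt _]. rewrite HDt in Hxt.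
    assert (Hbig : Rabs (x ts) + 2 <= / (N * h)).
    { assert (Nh : N * h <= N * q) by (apply Rmult_le_compat_l; unfold h in *; lra).
      assert (Nq : N * q = / (Rabs (x ts) + 2)) by (unfold q; field; lra).
      rewrite <- (Rinv_inv (Rabs (x ts) + 2)).
      apply Rinv_le_contravar; [nra | lra]. }
    assert (Hr : Rabs (t - ts) < eta).
    { rewrite Rabs_left; unfold t, h in *; lra. }
    specialize (Hcl t Ht0 Hr). apply Rabs_def2 in Hcl.
    pose proof (Rle_abs (x ts)). lra. }
  split.
  - unfold ts in PB. exact PB.
  - intros t Ht HtT. apply PA; auto.
    assert (t < ts).
    { assert (Hlt := Rbar_lt_le_trans _ _ _ HtT PB). simpl in Hlt. exact Hlt. }
    assert (N * t < N * ts) by (apply Rmult_lt_compat_l; auto). lra.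
Qed.
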